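(* The category $\mathbf{Frm}$ of frames and frame morphisms is equivalent to the category $\mathbf{Cons}$ of constructible algebras and constructible morphisms.
   Context: An interior algebra is a pair $(A,\square)$ with $A$ a boolean algebra and $\square:A\to A$ satisfying $\square 1=1$, $\square(a\wedge b)=\square a\wedge\square b$, $\square a\le a$, $\square a\le\square\square a$; $\mathcal O A=\{a:\square a=a\}$ is the set of open elements. $A$ is essential if the boolean subalgebra of $A$ generated by $\mathcal O A$ is all of $A$. A constructible algebra is an essential interior algebra $A$ such that the poset $\mathcal O A$ is a frame. A constructible morphism $f:A\to B$ between constructible algebras is a boolean homomorphism with $f(\square a)\le\square f(a)$ for all $a\in A$ (so $f$ maps opens to opens) such that $f|_{\mathcal O A}:\mathcal O A\to\mathcal O B$ is a frame morphism (preserves arbitrary joins and finite meets). *)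

(* Defs.v *)
From Stdlib Require Import ProofIrrelevance.
Set Implicit Arguments.
Unset Strict Implicit.

Record Poset := {
  pcar :> Type;
  ple : pcar -> pcar -> Prop;
  ple_refl : forall x, ple x x;
  ple_trans : forall x y z, ple x y -> ple y z -> ple x z;
  ple_antisym : forall x y, ple x y -> ple y x -> x = y }.

Definition is_lub (P : Poset) (S : P -> Prop) (x : P) : Prop :=
  (forall s, S s -> ple s x) /\
  (forall y, (forall s, S s -> ple s y) -> ple x y).

Definition is_glb2 (P : Poset) (a b m : P) : Prop :=
  ple m a /\ ple m b /\ (forall y, ple y a -> ple y b -> ple y m).

Definition is_top (P : Poset) (t : P) : Prop := forall y, ple y t.

Definition is_frame (P : Poset) : Prop :=
  (forall S : P -> Prop, exists x, is_lub S x) /\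
  (forall a b : P, exists m, is_glb2 a b m) /\
  (forall (a : P) (S : P -> Prop) (j m : P),
      is_lub S j -> is_glb2 a j m ->
      is_lub (fun y => exists s, S s /\ is_glb2 a s y) m).

Definition image (A B : Type) (f : A -> B) (S : A -> Prop) : B -> Prop :=
  fun y => exists x, S x /\ f x = y.

Definition frame_morphism (P Q : Poset) (f : P -> Q) : Prop :=
  (forall (S : P -> Prop) (j : P), is_lub S j -> is_lub (image f S) (f j)) /\
  (forall a b m : P, is_glb2 a b m -> is_glb2 (f a) (f b) (f m)) /\
  (forall t : P, is_top t -> is_top (f t)).

Record Frame := { frm_poset :> Poset; frm_is_frame : is_frame frm_poset }.

Record FrmHom (L M : Frame) := {
  frmh :> L -> M;
  frmh_morph : frame_morphism frmh }.

Record BoolAlg := {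
  ba_poset :> Poset;
  bmeet : ba_poset -> ba_poset -> ba_poset;
  bjoin : ba_poset -> ba_poset -> ba_poset;
  btop : ba_poset;
  bbot : ba_poset;
  bcompl : ba_poset -> ba_poset;
  bmeet_glb : forall a b, is_glb2 a b (bmeet a b);
  bjoin_lub : forall a b, is_lub (fun x => x = a \/ x = b) (bjoin a b);
  btop_top : forall a, ple a btop;
  bbot_bot : forall a, ple bbot a;
  bdistr : forall a b c, bmeet a (bjoin b c) = bjoin (bmeet a b) (bmeet a c);
  bcompl_meet : forall a, bmeet a (bcompl a) = bbot;
  bcompl_join : forall a, bjoin a (bcompl a) = btop }.

Definition bool_hom (A B : BoolAlg) (f : A -> B) : Prop :=
  (forall a b, f (bmeet a b) = bmeet (f a) (f b)) /\
  (forall a b, f (bjoin a b) = bjoin (f a) (f b)) /\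
  (forall a, f (bcompl a) = bcompl (f a)) /\
  f (btop A) = btop B /\ f (bbot A) = bbot B.

Record InteriorAlg := {
  ia_ba :> BoolAlg;
  box : ia_ba -> ia_ba;
  box_top : box (btop ia_ba) = btop ia_ba;
  box_meet : forall a b, box (bmeet a b) = bmeet (box a) (box b);
  box_deflate : forall a, ple (box a) a;
  box_idem : forall a, ple (box a) (box (box a)) }.

Definition open_car (A : InteriorAlg) : Type := { a : A | box a = a }.

Definition open_le (A : InteriorAlg) (x y : open_car A) : Prop :=
  ple (proj1_sig x) (proj1_sig y).

Lemma open_le_refl (A : InteriorAlg) (x : open_car A) : open_le x x.
Proof. apply ple_refl. Qed.

Lemma open_le_trans (A : InteriorAlg) (x y z : open_car A) :
  open_le x y -> open_le y z -> open_le x z.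
Proof. apply ple_trans. Qed.


Lemma open_le_antisym (A : InteriorAlg) (x y : open_car A) :
  open_le x y -> open_le y x -> x = y.
Proof.
  destruct x as [x hx], y as [y hy]; unfold open_le; simpl; intros h1 h2.
  pose proof (ple_antisym h1 h2) as e; subst y.
  rewrite (ProofIrrelevance.proof_irrelevance _ hx hy). reflexivity.
Qed.

Definition opens (A : InteriorAlg) : Poset :=
  {| pcar := open_car A; ple := @open_le A;
     ple_refl := @open_le_refl A; ple_trans := @open_le_trans A;
     ple_antisym := @open_le_antisym A |}.

Definition in_gen_by_opens (A : InteriorAlg) (a : A) : Prop :=
  forall P : A -> Prop,
    (forall x, box x = x -> P x) ->
    (forall x y, P x -> P y -> P (bmeet x y)) ->
    (forall x y, P x -> P y -> P (bjoin x y)) ->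
    (forall x, P x -> P (bcompl x)) ->
    P (btop A) -> P (bbot A) -> P a.

Definition essential (A : InteriorAlg) : Prop :=
  forall a : A, in_gen_by_opens a.

Record ConsAlg := {
  cons_ia :> InteriorAlg;
  cons_essential : essential cons_ia;
  cons_frame : is_frame (opens cons_ia) }.

Lemma box_le_open (A B : InteriorAlg) (f : A -> B)
  (hf : forall a, ple (f (box a)) (box (f a))) (a : A) :
  box a = a -> box (f a) = f a.
Proof.
  intro ha. apply ple_antisym.
  - apply box_deflate.
  - pose proof (hf a) as h. rewrite ha in h. exact h.
Qed.

Definition open_restr (A B : InteriorAlg) (f : A -> B)
  (hf : forall a, ple (f (box a)) (box (f a))) : opens A -> opens B :=
  fun x => exist _ (f (proj1_sig x)) (box_le_open hf (proj2_sig x)).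

Record ConsHom (A B : ConsAlg) := {
  consh :> A -> B;
  consh_bool : bool_hom consh;
  consh_box : forall a, ple (consh (box a)) (box (consh a));
  consh_frame : frame_morphism (open_restr consh_box) }.

(* Morphisms are compared through their underlying functions (pointwise). *)
Definition equivalence_Frm_Cons : Prop :=
  exists (F : Frame -> ConsAlg)
         (Fm : forall L M : Frame, FrmHom L M -> ConsHom (F L) (F M))
         (G : ConsAlg -> Frame)
         (Gm : forall A B : ConsAlg, ConsHom A B -> FrmHom (G A) (G B))
         (eta : forall L : Frame, FrmHom L (G (F L)))
         (eta' : forall L : Frame, FrmHom (G (F L)) L)
         (eps : forall A : ConsAlg, ConsHom (F (G A)) A)
         (eps' : forall A : ConsAlg, ConsHom A (F (G A))),
    (forall (L : Frame) (h : FrmHom L L),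
        (forall x, h x = x) -> forall y, Fm L L h y = y) /\
    (forall (L M N : Frame) (h : FrmHom L M) (k : FrmHom M N) (hk : FrmHom L N),
        (forall x, hk x = k (h x)) ->
        forall y, Fm L N hk y = Fm M N k (Fm L M h y)) /\
    (forall (A : ConsAlg) (h : ConsHom A A),
        (forall x, h x = x) -> forall y, Gm A A h y = y) /\
    (forall (A B C : ConsAlg) (h : ConsHom A B) (k : ConsHom B C) (hk : ConsHom A C),
        (forall x, hk x = k (h x)) ->
        forall y, Gm A C hk y = Gm B C k (Gm A B h y)) /\
    (* eta : Id ~> G F is a natural isomorphism *)
    (forall L x, eta' L (eta L x) = x) /\
    (forall L y, eta L (eta' L y) = y) /\
    (forall (L M : Frame) (h : FrmHom L M) x,
        Gm (F L) (F M) (Fm L M h) (eta L x) = eta M (h x)) /\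
    (* eps : F G ~> Id is a natural isomorphism *)
    (forall A x, eps' A (eps A x) = x) /\
    (forall A y, eps A (eps' A y) = y) /\
    (forall (A B : ConsAlg) (h : ConsHom A B) x,
        h (eps A x) = eps B (Fm (G A) (G B) (Gm A B h) x)).

(* Main.v *)
Require Import Defs.
From Stdlib Require Import ProofIrrelevance FunctionalExtensionality ClassicalEpsilon List.
Import ListNotations.
Set Implicit Arguments.
Unset Strict Implicit.


Tactic Notation "via" constr(yy) := apply (ple_trans (y:=yy)).

Lemma sig_eq (T : Type) (P : T -> Prop) (x y : {a | P a}) :
  proj1_sig x = proj1_sig y -> x = y.
Proof. destruct x as [x hx], y as [y hy]; simpl; intros e; subst y.
  f_equal; apply proof_irrelevance. Qed.

Lemma lub_unique (P : Poset) (S : P -> Prop) x y : is_lub S x -> is_lub S y -> x = y.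
Proof. intros [h1 h2] [h3 h4]. apply ple_antisym; auto. Qed.

Lemma glb_unique (P : Poset) (a b x y : P) : is_glb2 a b x -> is_glb2 a b y -> x = y.
Proof. intros (h1&h2&h3) (h4&h5&h6). apply ple_antisym; auto. Qed.

Lemma is_lub_ext (P : Poset) (S T : P -> Prop) x :
  (forall s, S s <-> T s) -> is_lub S x -> is_lub T x.
Proof. intros e [h1 h2]; split.
  - intros s hs; apply h1, e, hs.
  - intros y hy; apply h2; intros s hs; apply hy, e, hs. Qed.

Record DLat := {
  dp :> Poset;
  dmeet : dp -> dp -> dp; djoin : dp -> dp -> dp; dtop : dp; dbot : dp;
  dmeet_glb : forall a b, is_glb2 a b (dmeet a b);
  djoin_lub : forall a b, is_lub (fun x => x = a \/ x = b) (djoin a b);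
  dtop_top : forall a, ple a dtop; dbot_bot : forall a, ple dbot a;
  ddistr : forall a b c, ple (dmeet a (djoin b c)) (djoin (dmeet a b) (dmeet a c)) }.

Section DL.
Variable D : DLat.
Notation m := (@dmeet D). Notation j := (@djoin D).
Notation t := (@dtop D). Notation b := (@dbot D).
Implicit Types x y z u v : D.

Lemma mle_l x y : ple (m x y) x. Proof. apply (dmeet_glb x y). Qed.
Lemma mle_r x y : ple (m x y) y. Proof. apply (dmeet_glb x y). Qed.
Lemma m_glb x y z : ple z x -> ple z y -> ple z (m x y).
Proof. apply (dmeet_glb x y). Qed.
Lemma jle_l x y : ple x (j x y). Proof. apply (djoin_lub x y); auto. Qed.
Lemma jle_r x y : ple y (j x y). Proof. apply (djoin_lub x y); auto. Qed.
Lemma j_lub x y z : ple x z -> ple y z -> ple (j x y) z.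
Proof. intros h1 h2; apply (djoin_lub x y). intros s [->| ->]; auto. Qed.
Lemma le_t x : ple x t. Proof. apply dtop_top. Qed.
Lemma b_le x : ple b x. Proof. apply dbot_bot. Qed.
Lemma lrefl x : ple x x. Proof. apply ple_refl. Qed.

Lemma mle_lt x y z : ple x z -> ple (m x y) z.
Proof. intros h; via x; auto using mle_l. Qed.
Lemma mle_rt x y z : ple y z -> ple (m x y) z.
Proof. intros h; via y; auto using mle_r. Qed.
Lemma jle_lt x y z : ple z x -> ple z (j x y).
Proof. intros h; via x; auto using jle_l. Qed.
Lemma jle_rt x y z : ple z y -> ple z (j x y).
Proof. intros h; via y; auto using jle_r. Qed.

Lemma m_mono x y x' y' : ple x x' -> ple y y' -> ple (m x y) (m x' y').
Proof. intros; apply m_glb; [apply mle_lt|apply mle_rt]; auto. Qed.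
Lemma j_mono x y x' y' : ple x x' -> ple y y' -> ple (j x y) (j x' y').
Proof. intros; apply j_lub; [apply jle_lt|apply jle_rt]; auto. Qed.

Lemma distr_l x y z : ple (m x (j y z)) (j (m x y) (m x z)).
Proof. apply ddistr. Qed.
Lemma distr_r x y z : ple (m (j y z) x) (j (m y x) (m z x)).
Proof. via (m x (j y z)). apply m_glb; auto using mle_l, mle_r.
  via (j (m x y) (m x z)). apply distr_l.
  apply j_mono; apply m_glb; auto using mle_l, mle_r. Qed.

Lemma split_le x y z w : ple x (j y z) -> ple (m x y) w -> ple (m x z) w -> ple x w.
Proof. intros h1 h2 h3. via (m x (j y z)). apply m_glb; auto using lrefl.
  via (j (m x y) (m x z)). apply distr_l. apply j_lub; auto. Qed.

Lemma compl_unique x y y' :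
  ple (m x y) b -> ple t (j x y) -> ple (m x y') b -> ple t (j x y') -> y = y'.
Proof.
  assert (H : forall y y', ple (m x y) b -> ple t (j x y) ->
             ple (m x y') b -> ple t (j x y') -> ple y y').
  { intros y0 y1 h1 h2 h3 h4. apply (split_le (y:=x) (z:=y1)).
    via t; auto using le_t. 
    via b. via (m x y0). apply m_glb; auto using mle_l, mle_r. auto. apply b_le.
    apply mle_r. }
  intros; apply ple_antisym; auto.
Qed.

Lemma compl_step e e' c n :
  ple (m e e') b -> ple t (j e e') -> ple (m c n) b -> ple t (j c n) ->
  ple (m (j e c) (m e' n)) b /\ ple t (j (j e c) (m e' n)).
Proof.
  intros h1 h2 h3 h4; split.
  - via (j (m e (m e' n)) (m c (m e' n))). apply distr_r.
    apply j_lub.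
    + via (m e e'); auto. apply m_mono; auto using lrefl, mle_l.
    + via (m c n); auto. apply m_mono; auto using lrefl, mle_r.
  - apply (split_le (y:=e) (z:=e')). via t; auto using le_t.
    + apply mle_rt. apply jle_lt, jle_l.
    + apply (split_le (y:=c) (z:=n)). apply mle_lt. via t; auto using le_t.
      * apply mle_rt. apply jle_lt, jle_r.
      * apply jle_rt. apply m_glb. apply mle_lt, mle_r. apply mle_r.
Qed.

Lemma m_comm x y : m x y = m y x.
Proof. apply ple_antisym; apply m_glb; auto using mle_l, mle_r. Qed.
Lemma j_comm x y : j x y = j y x.
Proof. apply ple_antisym; apply j_lub; auto using jle_l, jle_r. Qed.
End DL.


Section FrameOps.
Variable L : Frame.
Implicit Types a c w x y z u v s : L.

Definition fsup (S : L -> Prop) : L :=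
  proj1_sig (constructive_indefinite_description _ (proj1 (frm_is_frame L) S)).
Lemma fsup_spec S : is_lub S (fsup S).
Proof. unfold fsup; destruct constructive_indefinite_description; auto. Qed.
Lemma fsup_ub S x : S x -> ple x (fsup S).
Proof. apply fsup_spec. Qed.
Lemma fsup_least S y : (forall x, S x -> ple x y) -> ple (fsup S) y.
Proof. apply fsup_spec. Qed.

Definition fmeet a c : L :=
  proj1_sig (constructive_indefinite_description _ (proj1 (proj2 (frm_is_frame L)) a c)).
Lemma fmeet_spec a c : is_glb2 a c (fmeet a c).
Proof. unfold fmeet; destruct constructive_indefinite_description; auto. Qed.
Definition fjoin a c := fsup (fun x => x = a \/ x = c).
Definition ftop := fsup (fun _ => True).
Definition fbot := fsup (fun _ => False).

Lemma fmeet_sup_le T x z : (forall w, T w -> ple (fmeet w x) z) -> ple (fmeet (fsup T) x) z.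
Proof.
  intros h.
  pose proof (proj2 (proj2 (frm_is_frame L)) x T (fsup T) (fmeet x (fsup T))
     (fsup_spec T) (fmeet_spec x (fsup T))) as H.
  via (fmeet x (fsup T)).
  { destruct (fmeet_spec (fsup T) x) as (h1&h2&_). apply (fmeet_spec x (fsup T)); auto. }
  apply H. intros y (s & hs & hg).
  rewrite (glb_unique hg (fmeet_spec x s)).
  via (fmeet s x). 2: apply h; auto.
  destruct (fmeet_spec x s) as (h1&h2&_). apply (fmeet_spec s x); auto.
Qed.

Definition fdistr a b c : ple (fmeet a (fjoin b c)) (fjoin (fmeet a b) (fmeet a c)).
Proof.
  via (fmeet (fjoin b c) a).
  { destruct (fmeet_spec a (fjoin b c)) as (h1&h2&_). apply (fmeet_spec (fjoin b c) a); auto. }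
  apply fmeet_sup_le. intros w [-> | ->].
  - via (fmeet a b). destruct (fmeet_spec b a) as (h1&h2&_). apply (fmeet_spec a b); auto.
    apply fsup_ub; auto.
  - via (fmeet a c). destruct (fmeet_spec c a) as (h1&h2&_). apply (fmeet_spec a c); auto.
    apply fsup_ub; auto.
Qed.

Definition FL : DLat.
Proof.
  refine {| dp := L; dmeet := fmeet; djoin := fjoin; dtop := ftop; dbot := fbot |}.
  - apply fmeet_spec.
  - intros; apply fsup_spec.
  - intros; apply fsup_ub; auto.
  - intros; apply fsup_least; intros ? [].
  - apply fdistr.
Defined.

Canonical Structure FL.
Definition fimp a c := fsup (fun w => ple (fmeet w a) c).
Lemma fimp_spec w a c : ple w (fimp a c) <-> ple (fmeet w a) c.
Proof. split.
  - intros h. via (fmeet (fimp a c) a). apply (@m_mono FL); auto using (@lrefl FL).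
    apply fmeet_sup_le. auto.
  - intros h. apply fsup_ub; auto.
Qed.
End FrameOps.

Ltac lat :=
  first [ assumption
  | apply lrefl
  | apply le_t
  | apply b_le
  | match goal with
    | |- ple (djoin _ _) _ => apply j_lub; lat
    | |- ple _ (dmeet _ _) => apply m_glb; lat
    | |- ple (dmeet _ _) _ => first [apply mle_lt; lat | apply mle_rt; lat]
    | |- ple _ (djoin _ _) => first [apply jle_lt; lat | apply jle_rt; lat]
    | |- ple (fjoin _ _) _ => apply j_lub; lat
    | |- ple _ (fmeet _ _) => apply m_glb; lat
    | |- ple (fmeet _ _) _ => first [apply mle_lt; lat | apply mle_rt; lat]
    | |- ple _ (fjoin _ _) => first [apply jle_lt; lat | apply jle_rt; lat]
    | |- ple (bjoin _ _) _ => apply j_lub; lat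
    | |- ple _ (bmeet _ _) => apply m_glb; lat
    | |- ple (bmeet _ _) _ => first [apply mle_lt; lat | apply mle_rt; lat]
    | |- ple _ (bjoin _ _) => first [apply jle_lt; lat | apply jle_rt; lat]
    end ].





Section BL.
Variable L : Frame.
Notation D := (FL L).
Notation m := (@dmeet D). Notation j := (@djoin D).
Notation tp := (@dtop D). Notation bt := (@dbot D).
Notation imp := (@fimp L).
Implicit Types a c w x y z u v s t : D.

Lemma imp_spec w a c : ple w (imp a c) <-> ple (m w a) c.
Proof. exact (fimp_spec w a c). Qed.

Fixpoint jf (C : list (L * L)) (z : L) : L :=
  match C with
  | [] => tp
  | p :: C' => m (imp (fst p) (j (snd p) z)) (jf C' z)
  end.

Definition Gd (C : list (L*L)) (w z : L) : Prop :=
  forall s t, In (s,t) C -> ple (m w s) (j t z).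

Lemma jf_ge C w z : ple w (jf C z) <-> Gd C w z.
Proof.
  unfold Gd; induction C as [|[u v] C IH]; cbn [jf fst snd].
  - split; [intros _ s t []|intros _; lat].
  - split.
    + intros h s t [e|hin].
      * injection e as <- <-. apply imp_spec. via (m (imp u (j v z)) (jf C z)); auto; lat.
      * apply IH; auto. via (m (imp u (j v z)) (jf C z)); auto; lat.
    + intros h. apply m_glb. apply imp_spec. apply h; left; auto. apply IH. intros s t hin; apply h; right; auto.
Qed.

Lemma Gd_jf C z : Gd C (jf C z) z.
Proof. apply jf_ge, lrefl. Qed.

Definition Cov s t C := forall z, ple (m s (jf C z)) (j t z).

Lemma cov_iff s t C : Cov s t C <-> forall w z, Gd C w z -> ple (m s w) (j t z).
Proof. split.
  - intros h w z g. via (m s (jf C z)). apply m_mono. lat. apply jf_ge; auto. apply h.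
  - intros h z. apply h, Gd_jf.
Qed.

Definition LE (X Y : list (L*L)) := forall z, ple (jf Y z) (jf X z).

Lemma LE_iff X Y : LE X Y <-> forall w z, Gd Y w z -> Gd X w z.
Proof. split.
  - intros h w z g. apply jf_ge. via (jf Y z). apply jf_ge; auto. apply h.
  - intros h z. apply jf_ge, h, Gd_jf.
Qed.

Lemma LE_cov X Y : LE X Y <-> forall s t, In (s,t) X -> Cov s t Y.
Proof. rewrite LE_iff. split.
  - intros h s t hin. apply cov_iff. intros w z g. via (m w s). lat. apply (h w z g); auto.
  - intros h w z g s t hin. pose proof (proj1 (cov_iff s t Y) (h s t hin) w z g).
    via (m s w); auto; lat.
Qed.

Lemma cov_nil s t : Cov s t [] <-> ple s t.
Proof. rewrite cov_iff. unfold Gd. split.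
  - intros h. via (m s tp). lat. via (j t bt). apply h. intros ? ? []. lat.
  - intros h w z _. via s. lat. via t; auto. lat.
Qed.

Lemma cov_cons s t u v C :
  Cov s t ((u,v)::C) <-> Cov s (j t u) C /\ Cov (m s v) t C.
Proof. rewrite !cov_iff. unfold Gd. split.
  - intros h. split.
    + intros w z g. via (j t (j u z)).
      * apply h. intros s' t' [e|hin].
        -- injection e as <- <-. via u. lat. lat.
        -- via (j t' z). auto. lat.
      * lat.
    + intros w z g. via (m s (m v w)). lat. apply h.
      intros s' t' [e|hin].
      * injection e as <- <-. lat.
      * via (m w s'). lat. auto.
  - intros [h1 h2] w z g.
    assert (gu : ple (m w u) (j v z)) by (apply g; left; auto).
    assert (gC : forall s' t', In (s',t') C -> ple (m w s') (j t' z)) by (intros; apply g; right; auto).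
    pose proof (h1 w z gC) as a1. pose proof (h2 w z gC) as a2.
    apply (@split_le D) with (y := j t z) (z := u).
    + via (j (j t u) z); auto. lat.
    + lat.
    + apply (@split_le D) with (y := v) (z := z).
      * via (m w u). lat. auto.
      * via (m (m s v) w). lat. auto.
      * lat.
Qed.

Lemma cov_mono s t s' t' C : Cov s t C -> ple s' (j s t') -> ple (m s' t) t' -> Cov s' t' C.
Proof. rewrite !cov_iff. intros h h1 h2 w z g.
  apply (@split_le D) with (y := s) (z := t').
  - via s'. lat. auto.
  - apply (@split_le D) with (y := t) (z := z).
    + via (j t z). via (m s w). lat. apply h; auto. lat.
    + via t'. via (m s' t). lat. auto. lat.
    + lat.
  - lat.
Qed.

Lemma cov_cut s t x C : Cov s (j t x) C -> Cov (m s x) t C -> Cov s t C.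
Proof. rewrite !cov_iff. intros h1 h2 w z g.
  apply (@split_le D) with (y := j t z) (z := x).
  - via (j (j t x) z). apply h1; auto. lat.
  - lat.
  - via (m (m s x) w). lat. apply h2; auto.
Qed.

Lemma cov_app_l s t C C' : Cov s t C -> Cov s t (C ++ C').
Proof. rewrite !cov_iff. intros h w z g. apply h. intros s' t' hin. apply g, in_or_app; auto. Qed.
Lemma cov_app_r s t C C' : Cov s t C' -> Cov s t (C ++ C').
Proof. rewrite !cov_iff. intros h w z g. apply h. intros s' t' hin. apply g, in_or_app; auto. Qed.

Lemma cov_mem s t C : In (s,t) C -> Cov s t C.
Proof. rewrite cov_iff. intros hin w z g. via (m w s). lat. apply g; auto. Qed.

Definition mapuv u v (C : list (L*L)) : list (L*L) :=
  map (fun q => (m u (fst q), j v (snd q))) C.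

Lemma cov_map s t u v C : Cov s t C -> Cov (m s u) (j t v) (mapuv u v C).
Proof. rewrite !cov_iff. intros h w z g.
  assert (g' : Gd C (m u w) (j v z)).
  { intros a b hin. assert (hh := g (m u a) (j v b)).
    unfold mapuv in hh. rewrite in_map_iff in hh.
    specialize (hh (ex_intro _ (a,b) (conj eq_refl hin))).
    via (m w (m u a)). lat. via (j (j v b) z). auto. lat. }
  via (m s (m u w)). lat. via (j t (j v z)). apply h; auto. lat.
Qed.

Fixpoint prodl (C E : list (L*L)) : list (L*L) :=
  match C with
  | [] => []
  | (u,v) :: C' => mapuv u v E ++ prodl C' E
  end.

Lemma in_prodl s t C E : In (s,t) (prodl C E) <->
  exists u v a b, In (u,v) C /\ In (a,b) E /\ s = m u a /\ t = j v b.
Proof.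
  induction C as [|[u v] C IH]; cbn [jf prodl fst snd In app].
  - split; [intros []|intros (?&?&?&?&[]&_)].
  - rewrite in_app_iff, IH. unfold mapuv; rewrite in_map_iff. split.
    + intros [([a b]&e&hin)|(u'&v'&a&b&h1&h2&h3&h4)].
      * injection e as <- <-. exists u, v, a, b; auto.
      * exists u', v', a, b; auto.
    + intros (u'&v'&a&b&[e|h1]&h2&h3&h4).
      * injection e as -> ->. left. exists (a,b). subst; auto.
      * right. exists u', v', a, b; auto.
Qed.

Lemma cov_prod s t C E : Cov s t C -> Cov s t E -> Cov s t (prodl C E).
Proof.
  revert s t; induction C as [|[u v] C IH]; intros s t h1 h2; cbn [prodl].
  - exact h1.
  - apply cov_cons in h1 as [ha hb].
    apply cov_cut with (x := u).
    + apply cov_app_r. apply IH; auto. apply cov_mono with s t; auto; lat.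
    + apply cov_cut with (x := v).
      * apply cov_app_l. apply cov_mono with (m s u) (j t v). apply cov_map; auto. lat. lat.
      * apply cov_app_r. apply IH.
        -- apply cov_mono with (m s v) t; auto; lat.
        -- apply cov_mono with s t; auto; lat.
Qed.

End BL.



Section BL2.
Variable L : Frame.
Notation D := (FL L).
Notation m := (@dmeet D). Notation j := (@djoin D).
Notation tp := (@dtop D). Notation bt := (@dbot D).
Notation imp := (@fimp L).
Notation LE := (@LE L). Notation Cov := (@Cov L). Notation jf := (@jf L).
Implicit Types a c w y z u v s t : D.

Definition BC := { f : L -> L | exists C, f = jf C }.
Definition Ble (f g : BC) : Prop := forall z, ple (proj1_sig g z) (proj1_sig f z).
Lemma Ble_refl f : Ble f f. Proof. intros z; apply lrefl. Qed.
Lemma Ble_trans f g h : Ble f g -> Ble g h -> Ble f h.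
Proof. intros h1 h2 z. via (proj1_sig g z); auto. Qed.
Lemma Ble_antisym f g : Ble f g -> Ble g f -> f = g.
Proof. intros h1 h2. apply sig_eq. apply functional_extensionality; intros z.
  apply ple_antisym; auto. Qed.
Definition BP : Poset := {| pcar := BC; ple := Ble; ple_refl := Ble_refl;
  ple_trans := Ble_trans; ple_antisym := Ble_antisym |}.

Definition mk (C : list (L*L)) : BP := exist _ (jf C) (ex_intro _ C eq_refl).
Definition rep (f : BP) : list (L*L) :=
  proj1_sig (constructive_indefinite_description _ (proj2_sig f)).
Lemma rep_spec (f : BP) : f = mk (rep f).
Proof. apply sig_eq. unfold rep; destruct constructive_indefinite_description; simpl; auto. Qed.
Lemma mk_le X Y : ple (mk X) (mk Y) <-> LE X Y.
Proof. reflexivity. Qed.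
Lemma mk_eq X Y : LE X Y -> LE Y X -> mk X = mk Y.
Proof. intros; apply ple_antisym; auto. Qed.
Lemma mk_rep X : mk (rep (mk X)) = mk X.
Proof. symmetry; apply rep_spec. Qed.

Lemma LE_cov' X Y : LE X Y <-> forall s t, In (s,t) X -> Cov s t Y.
Proof. apply LE_cov. Qed.

Lemma mk_glb X Y : is_glb2 (mk X) (mk Y) (mk (prodl X Y)).
Proof. split; [|split].
  - apply mk_le, LE_cov'. intros s t hin. apply in_prodl in hin as (u&v&a&b&h1&h2&->&->).
    apply cov_mono with u v. apply cov_mem; auto. lat. lat.
  - apply mk_le, LE_cov'. intros s t hin. apply in_prodl in hin as (u&v&a&b&h1&h2&->&->).
    apply cov_mono with a b. apply cov_mem; auto. lat. lat.
  - intros f. rewrite (rep_spec f). intros h1 h2. apply mk_le. apply (proj1 (mk_le _ _)) in h1. apply (proj1 (mk_le _ _)) in h2.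
    rewrite LE_cov' in h1, h2 |- *. intros s t hin. apply cov_prod; auto.
Qed.

Lemma mk_lub X Y : is_lub (fun x : BP => x = mk X \/ x = mk Y) (mk (X ++ Y)).
Proof. split.
  - intros f [-> | ->]; apply mk_le, LE_cov'; intros s t hin; apply cov_mem, in_or_app; auto.
  - intros f h. rewrite (rep_spec f) in h |- *. apply mk_le.
    assert (h1 := h _ (or_introl eq_refl)). assert (h2 := h _ (or_intror eq_refl)).
    apply (proj1 (mk_le _ _)) in h1. apply (proj1 (mk_le _ _)) in h2. rewrite LE_cov' in h1, h2 |- *.
    intros s t hin. apply in_app_or in hin as [hin|hin]; auto.
Qed.

Definition Bmeet (f g : BP) : BP := mk (prodl (rep f) (rep g)).
Definition Bjoin (f g : BP) : BP := mk (rep f ++ rep g).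
Definition Btop : BP := mk [(tp, bt)].
Definition Bbot : BP := mk [].

Lemma Bmeet_glb f g : is_glb2 f g (Bmeet f g).
Proof. unfold Bmeet. pose proof (mk_glb (rep f) (rep g)) as H.
  rewrite <- (rep_spec f), <- (rep_spec g) in H. exact H. Qed.
Lemma Bjoin_lub f g : is_lub (fun x => x = f \/ x = g) (Bjoin f g).
Proof. unfold Bjoin. pose proof (mk_lub (rep f) (rep g)) as H.
  rewrite <- (rep_spec f), <- (rep_spec g) in H. exact H. Qed.
Lemma Bmeet_mk X Y : Bmeet (mk X) (mk Y) = mk (prodl X Y).
Proof. apply (glb_unique (Bmeet_glb _ _) (mk_glb X Y)). Qed.
Lemma Bjoin_mk X Y : Bjoin (mk X) (mk Y) = mk (X ++ Y).
Proof. apply (lub_unique (Bjoin_lub _ _) (mk_lub X Y)). Qed.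

Lemma Btop_top f : ple f Btop.
Proof. rewrite (rep_spec f). apply mk_le, LE_cov'. intros s t hin.
  apply cov_cons. split; apply cov_nil; lat. Qed.
Lemma Bbot_bot f : ple Bbot f.
Proof. rewrite (rep_spec f). apply mk_le, LE_cov'. intros s t []. Qed.

Lemma Bdistr f g h : ple (Bmeet f (Bjoin g h)) (Bjoin (Bmeet f g) (Bmeet f h)).
Proof.
  rewrite (rep_spec f), (rep_spec g), (rep_spec h).
  rewrite !Bjoin_mk, !Bmeet_mk, Bjoin_mk. apply mk_le, LE_cov'.
  intros s t hin. apply cov_mem. apply in_prodl in hin as (u&v&a&b&h1&h2&->&->).
  apply in_app_or in h2 as [h2|h2]; apply in_or_app; [left|right]; apply in_prodl; eauto 10.
Qed.

Definition BD : DLat := {| dp := BP; dmeet := Bmeet; djoin := Bjoin; dtop := Btop; dbot := Bbot;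
  dmeet_glb := Bmeet_glb; djoin_lub := Bjoin_lub; dtop_top := Btop_top; dbot_bot := Bbot_bot;
  ddistr := Bdistr |}.

Fixpoint complL (C : list (L*L)) : list (L*L) :=
  match C with
  | [] => [(tp, bt)]
  | (u,v) :: C' => prodl [(tp,u); (v,bt)] (complL C')
  end.

Lemma single_compl u v :
  ple (Bmeet (mk [(u,v)]) (mk [(tp,u);(v,bt)])) Bbot /\
  ple Btop (Bjoin (mk [(u,v)]) (mk [(tp,u);(v,bt)])).
Proof. rewrite Bmeet_mk, Bjoin_mk. split.
  - apply mk_le, LE_cov'. intros s t hin. apply cov_nil.
    apply in_prodl in hin as (u'&v'&a&b&[e|[]]&h2&->&->). injection e as <- <-.
    destruct h2 as [e|[e|[]]]; injection e as <- <-; lat.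
  - apply mk_le, LE_cov'. intros s t [e|[]]. injection e as <- <-. cbn [app].
    apply cov_cons. split.
    + apply cov_mono with tp u. apply cov_mem; simpl; auto. lat. lat.
    + apply cov_mono with v bt. apply cov_mem; simpl; auto. lat. lat.
Qed.

Lemma complL_spec X : ple (Bmeet (mk X) (mk (complL X))) Bbot /\ ple Btop (Bjoin (mk X) (mk (complL X))).
Proof.
  induction X as [|[u v] X [IH1 IH2]].
  - split. apply (@mle_l BD). apply (@jle_r BD).
  - replace (mk ((u,v)::X)) with (Bjoin (mk [(u,v)]) (mk X)) by (rewrite Bjoin_mk; reflexivity).
    replace (mk (complL ((u,v)::X))) with (Bmeet (mk [(tp,u);(v,bt)]) (mk (complL X)))
      by (rewrite Bmeet_mk; reflexivity).
    destruct (single_compl u v) as [h1 h2].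
    exact (@compl_step BD _ _ _ _ h1 h2 IH1 IH2).
Qed.

Definition Bcompl (f : BP) : BP := mk (complL (rep f)).
Lemma Bcompl_meet f : Bmeet f (Bcompl f) = Bbot.
Proof. apply ple_antisym. 2: apply Bbot_bot. unfold Bcompl. rewrite (rep_spec f) at 1.
  apply complL_spec. Qed.
Lemma Bcompl_join f : Bjoin f (Bcompl f) = Btop.
Proof. apply ple_antisym. apply Btop_top. unfold Bcompl. rewrite (rep_spec f) at 1.
  apply complL_spec. Qed.
Lemma Bdistr_eq f g h : Bmeet f (Bjoin g h) = Bjoin (Bmeet f g) (Bmeet f h).
Proof. apply ple_antisym. apply Bdistr.
  apply (@j_lub BD); apply (@m_mono BD); try apply (@lrefl BD). apply (@jle_l BD). apply (@jle_r BD).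
Qed.

Definition BB : BoolAlg := {| ba_poset := BP; bmeet := Bmeet; bjoin := Bjoin; btop := Btop;
  bbot := Bbot; bcompl := Bcompl; bmeet_glb := Bmeet_glb; bjoin_lub := Bjoin_lub;
  btop_top := Btop_top; bbot_bot := Bbot_bot; bdistr := Bdistr_eq;
  bcompl_meet := Bcompl_meet; bcompl_join := Bcompl_join |}.

End BL2.


Definition oiso (P Q : Poset) (f : P -> Q) (g : Q -> P) : Prop :=
  (forall x, g (f x) = x) /\ (forall y, f (g y) = y) /\
  (forall x x', ple x x' -> ple (f x) (f x')) /\ (forall y y', ple y y' -> ple (g y) (g y')).

Section Iso.
Variables (P Q : Poset) (f : P -> Q) (g : Q -> P) (H : oiso f g).

Lemma oiso_sym : oiso g f.
Proof. destruct H as (h1&h2&h3&h4); repeat split; auto. Qed.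

Lemma oiso_lub S x : is_lub S x -> is_lub (image f S) (f x).
Proof. destruct H as (h1&h2&h3&h4). intros [u l]. split.
  - intros y (s&hs&<-). auto.
  - intros y hy. rewrite <- (h2 y). apply h3. apply l. intros s hs.
    rewrite <- (h1 s). apply h4. apply hy. exists s; auto.
Qed.

Lemma oiso_glb a b c : is_glb2 a b c -> is_glb2 (f a) (f b) (f c).
Proof. destruct H as (h1&h2&h3&h4). intros (u1&u2&l). split; [|split]; auto.
  intros y ya yb. rewrite <- (h2 y). apply h3. apply l.
  rewrite <- (h1 a); auto. rewrite <- (h1 b); auto. Qed.

Lemma oiso_top t : is_top t -> is_top (f t).
Proof. destruct H as (h1&h2&h3&h4). intros ht y. rewrite <- (h2 y). apply h3, ht. Qed.

Lemma oiso_fm : frame_morphism f.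
Proof. split; [|split]. apply oiso_lub. apply oiso_glb. apply oiso_top. Qed.

End Iso.

Lemma oiso_frame (P Q : Poset) (f : P -> Q) (g : Q -> P) (H : oiso f g) : is_frame P -> is_frame Q.
Proof. pose proof H as (h1&h2&h3&h4). intros (fl & fg & fd). split; [|split].
  - intros S. destruct (fl (fun p => S (f p))) as [x hx]. exists (f x).
    apply is_lub_ext with (image f (fun p => S (f p))).
    + intros s; split. intros (p&hp&<-); auto. intros hs. exists (g s). rewrite h2; auto.
    + apply (oiso_lub H); auto.
  - intros a b. destruct (fg (g a) (g b)) as [c hc]. exists (f c).
    rewrite <- (h2 a), <- (h2 b). apply (oiso_glb H); auto.
  - intros a S jj mm hj hm.
    pose proof (oiso_sym H) as Hs.
    assert (hj' := oiso_lub Hs hj). assert (hm' := oiso_glb Hs hm).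
    pose proof (fd _ _ _ _ hj' hm') as hd.
    pose proof (oiso_lub H hd) as hd'. rewrite h2 in hd'.
    apply is_lub_ext with (2 := hd'). intros y; split.
    + intros (y0 & (s & (s0 & hs0 & <-) & hg) & <-). exists s0. split; auto.
      rewrite <- (h2 a), <- (h2 s0). apply (oiso_glb H); auto.
    + intros (s0 & hs0 & hg). exists (g y). split; [|apply h2].
      exists (g s0). split. exists s0; auto. apply (oiso_glb Hs hg).
Qed.


Lemma fm_comp (P Q R : Poset) (f : P -> Q) (g : Q -> R) :
  frame_morphism f -> frame_morphism g -> frame_morphism (fun x => g (f x)).
Proof. intros (a1&a2&a3) (b1&b2&b3). split; [|split]; auto.
  intros S x hx. apply is_lub_ext with (image g (image f S)).
  - intros y; split.
    + intros (y0 & (x0 & hx0 & <-) & <-). exists x0; auto.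
    + intros (x0 & hx0 & <-). exists (f x0); split; auto. exists x0; auto.
  - apply b1, a1, hx.
Qed.

Lemma fm_ext (P Q : Poset) (f f' : P -> Q) :
  (forall x, f x = f' x) -> frame_morphism f -> frame_morphism f'.
Proof. intros e. assert (f = f') by (apply functional_extensionality; auto). subst; auto. Qed.

Definition BAD (A : BoolAlg) : DLat.
Proof.
  refine {| dp := A; dmeet := @bmeet A; djoin := @bjoin A; dtop := btop A; dbot := bbot A |}.
  apply bmeet_glb. apply bjoin_lub. apply btop_top. apply bbot_bot.
  intros; rewrite bdistr; apply ple_refl.
Defined.
Canonical Structure BAD.

Lemma oiso_bool (A B : BoolAlg) (f : A -> B) (g : B -> A) : oiso f g -> bool_hom f.
Proof.
  intros H. pose proof H as (h1&h2&h3&h4).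
  assert (Hm : forall a b, f (bmeet a b) = bmeet (f a) (f b)).
  { intros a b. apply (glb_unique (oiso_glb H (bmeet_glb a b)) (bmeet_glb _ _)). }
  assert (Hj : forall a b, f (bjoin a b) = bjoin (f a) (f b)).
  { intros a b. apply (lub_unique (P := B) (S := fun x => x = f a \/ x = f b)).
    apply is_lub_ext with (image f (fun x => x = a \/ x = b)).
    - intros y; split. intros (x&[->| ->]&<-); auto.
      intros [->| ->]; [exists a | exists b]; auto.
    - apply (oiso_lub H). apply bjoin_lub.
    - apply bjoin_lub. }
  assert (Ht : f (btop A) = btop B).
  { apply ple_antisym. apply btop_top. rewrite <- (h2 (btop B)). apply h3, btop_top. }
  assert (Hb : f (bbot A) = bbot B).
  { apply ple_antisym. 2: apply bbot_bot. rewrite <- (h2 (bbot B)). apply h3, bbot_bot. }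
  split; [|split; [|split; [|split]]]; auto.
  intros a. apply (@compl_unique (BAD B) (f a)); simpl.
  - rewrite <- Hm, bcompl_meet, Hb. apply ple_refl.
  - rewrite <- Hj, bcompl_join, Ht. apply ple_refl.
  - rewrite bcompl_meet. apply ple_refl.
  - rewrite bcompl_join. apply ple_refl.
Qed.



Section BL3.
Variable L : Frame.
Notation D := (FL L).
Notation m := (@dmeet D). Notation j := (@djoin D).
Notation tp := (@dtop D). Notation bt := (@dbot D).
Notation imp := (@fimp L).
Notation BP := (BP L).
Implicit Types w z u v : D.

Lemma imp_mp a c : ple (m a (imp a c)) c.
Proof. via (m (imp a c) a). lat. apply imp_spec. lat. Qed.

Definition io w : BP := mk [(w, bt)].

Lemma io_le w (f : BP) : ple (io w) f <-> forall z, ple (m w (proj1_sig f z)) z.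
Proof. split.
  - intros h z. specialize (h z). cbn [proj1_sig io mk jf fst snd] in h.
    via (m w (imp w (j bt z))).
    + apply m_mono. lat. via (m (imp w (j bt z)) tp); auto. lat.
    + via (j bt z). 2: lat. apply imp_mp.
  - intros h z. cbn [proj1_sig io mk jf fst snd]. apply m_glb. 2: lat.
    apply imp_spec. via z. via (m w (proj1_sig f z)); auto. lat. lat.
Qed.

Definition w0 (f : BP) : D := fsup (fun w => forall z, ple (m w (proj1_sig f z)) z).
Lemma w0_spec f : ple (io (w0 f)) f.
Proof. apply io_le. intros z. apply fmeet_sup_le. intros w h; apply h. Qed.
Lemma w0_ge w f : ple (io w) f -> ple w (w0 f).
Proof. intros h. apply fsup_ub. apply io_le; auto. Qed.
Lemma io_mono u w : ple u w -> ple (io u) (io w).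
Proof. intros h. apply io_le. intros z. cbn [proj1_sig io mk jf fst snd].
  via (m w (imp w (j bt z))). apply m_mono; lat.
  via (j bt z). apply imp_mp. lat. Qed.
Lemma io_refl u w : ple (io u) (io w) -> ple u w.
Proof. intros h0. pose proof (proj1 (io_le u (io w)) h0 w) as h. cbn [proj1_sig io mk jf fst snd] in h.
  via (m u (m (imp w (j bt w)) tp)); auto. apply m_glb. lat. apply m_glb. 2: lat.
  apply imp_spec. lat. Qed.
Lemma w0_io u : w0 (io u) = u.
Proof. apply ple_antisym. apply io_refl, w0_spec. apply w0_ge, ple_refl. Qed.

Definition Bbox (f : BP) : BP := io (w0 f).
Lemma Bbox_io u : Bbox (io u) = io u.
Proof. unfold Bbox; rewrite w0_io; auto. Qed.
Lemma Bbox_le f : ple (Bbox f) f.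
Proof. apply w0_spec. Qed.
Lemma Bbox_mono f g : ple f g -> ple (Bbox f) (Bbox g).
Proof. intros h. apply io_mono, w0_ge. via f; auto. apply Bbox_le. Qed.

Lemma io_meet p q : ple (Bmeet (io p) (io q)) (io (m p q)).
Proof. unfold io. rewrite Bmeet_mk. apply LE_cov. intros s t hin.
  apply in_prodl in hin as (u&v&a&b&[e|[]]&[e'|[]]&->&->).
  injection e as <- <-. injection e' as <- <-.
  apply cov_mono with (m p q) bt. apply cov_mem; left; auto. lat. lat. Qed.

Lemma Bbox_meet f g : Bbox (Bmeet f g) = Bmeet (Bbox f) (Bbox g).
Proof. apply ple_antisym.
  - apply (@m_glb (BD L)); apply Bbox_mono. apply (@mle_l (BD L)). apply (@mle_r (BD L)).
  - via (io (m (w0 f) (w0 g))). apply io_meet.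
    apply io_mono, w0_ge. apply (@m_glb (BD L)).
    + via (io (w0 f)). apply io_mono; lat. apply w0_spec.
    + via (io (w0 g)). apply io_mono; lat. apply w0_spec.
Qed.

Definition IB : InteriorAlg.
Proof.
  refine {| ia_ba := BB L; box := Bbox |}.
  - exact (Bbox_io tp).
  - apply Bbox_meet.
  - apply Bbox_le.
  - intros a. change (ple (Bbox a) (Bbox (Bbox a))). unfold Bbox at 3. rewrite Bbox_io. apply ple_refl.
Defined.

Definition phi (u : L) : opens IB := exist _ (io u) (Bbox_io u).
Definition psi (x : opens IB) : L := w0 (proj1_sig x).

Lemma phi_psi_iso : oiso (P := frm_poset L) (Q := opens IB) phi psi.
Proof. split; [|split; [|split]].
  - intros u. apply w0_io.
  - intros [x hx]. apply sig_eq. simpl. exact hx.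
  - intros u w h. apply io_mono, h.
  - intros [x hx] [y hy] h. unfold psi; simpl. apply w0_ge. via x. apply w0_spec. exact h.
Qed.

Lemma IB_frame : is_frame (opens IB).
Proof. apply (oiso_frame phi_psi_iso). apply frm_is_frame. Qed.

Lemma io_compl v : Bcompl (io v) = mk [(tp, v)].
Proof.
  apply (@compl_unique (BD L) (io v)).
  - change (ple (Bmeet (io v) (Bcompl (io v))) (Bbot L)). rewrite Bcompl_meet. apply ple_refl.
  - change (ple (Btop L) (Bjoin (io v) (Bcompl (io v)))). rewrite Bcompl_join. apply ple_refl.
  - change (ple (Bmeet (io v) (mk [(tp,v)])) (Bbot L)). unfold io. rewrite Bmeet_mk.
    apply LE_cov. intros s t hin. apply in_prodl in hin as (u'&v'&a&b&[e|[]]&[e'|[]]&->&->).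
    injection e as <- <-. injection e' as <- <-. apply cov_nil. lat.
  - change (ple (Btop L) (Bjoin (io v) (mk [(tp,v)]))). unfold io. rewrite Bjoin_mk.
    apply LE_cov. intros s t [e|[]]. injection e as <- <-. cbn [app].
    apply cov_cons; split.
    + apply cov_mono with tp v. apply cov_mem; left; auto. lat. lat.
    + apply cov_mono with tp v. apply cov_mem; left; auto. lat. lat.
Qed.

Lemma IB_essential : essential IB.
Proof.
  intros a P hopen hm hj hc ht hb.
  rewrite (rep_spec a). induction (rep a) as [|[u v] X IH].
  - exact hb.
  - replace (mk ((u,v)::X)) with (Bjoin (mk [(u,v)]) (mk X)) by (rewrite Bjoin_mk; reflexivity).
    apply hj; auto.
    replace (mk [(u,v)]) with (Bmeet (io u) (Bcompl (io v))).
    + apply hm. apply hopen, Bbox_io. apply hc, hopen, Bbox_io.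
    + rewrite io_compl. unfold io. rewrite Bmeet_mk. cbn [prodl mapuv map fst snd app].
      apply mk_eq; apply LE_cov; intros s t [e|[]]; injection e as <- <-.
      * apply cov_mono with u v. apply cov_mem; left; auto. lat. lat.
      * apply cov_mono with (m u tp) (j bt v). apply cov_mem; left; auto. lat. lat.
Qed.

Definition FB : ConsAlg := {| cons_ia := IB; cons_essential := IB_essential; cons_frame := IB_frame |}.

End BL3.



Section Fmap.
Variables (L M : Frame) (h : FrmHom L M).
Notation mL := (@dmeet (FL L)). Notation jL := (@djoin (FL L)).
Notation mM := (@dmeet (FL M)). Notation jM := (@djoin (FL M)).

Lemma h_le (a b : L) : ple a b -> ple (h a) (h b).
Proof. intros hab.
  assert (g : is_glb2 a b a) by (split; [apply ple_refl|split; auto]).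
  apply (proj1 (proj2 (frmh_morph h)) _ _ _ g). Qed.
Lemma h_meet (a b : L) : h (mL a b) = mM (h a) (h b).
Proof. apply (glb_unique (proj1 (proj2 (frmh_morph h)) _ _ _ (fmeet_spec a b)) (fmeet_spec _ _)). Qed.
Lemma h_join (a b : L) : h (jL a b) = jM (h a) (h b).
Proof. apply (lub_unique (P := frm_poset M) (S := fun x => x = h a \/ x = h b)).
  - apply is_lub_ext with (image h (fun x => x = a \/ x = b)).
    + intros y; split. intros (x&[->| ->]&<-); auto.
      intros [->| ->]; [exists a | exists b]; auto.
    + apply (proj1 (frmh_morph h)). apply fsup_spec.
  - apply fsup_spec. Qed.
Lemma h_top : h (dtop (FL L)) = dtop (FL M).
Proof. apply ple_antisym. apply (@le_t (FL M)).
  apply (proj2 (proj2 (frmh_morph h))). intros y. apply (@le_t (FL L)). Qed.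
Lemma h_bot : h (dbot (FL L)) = dbot (FL M).
Proof. apply ple_antisym. 2: apply (@b_le (FL M)).
  apply (proj1 (frmh_morph h) _ _ (fsup_spec _)). intros s (x&[]&_). Qed.

Definition hh (p : L * L) : M * M := (h (fst p), h (snd p)).

Lemma map_mapuv u v C : map hh (mapuv u v C) = mapuv (h u) (h v) (map hh C).
Proof. unfold mapuv. rewrite !map_map. apply map_ext. intros [a b]. unfold hh; cbn [fst snd map].
  rewrite h_meet, h_join. reflexivity. Qed.
Lemma map_prodl C E : map hh (prodl C E) = prodl (map hh C) (map hh E).
Proof. induction C as [|[u v] C IH]; cbn [prodl map]. auto.
  rewrite map_app, IH, map_mapuv. reflexivity. Qed.
Lemma map_complL C : map hh (complL C) = complL (map hh C).
Proof. induction C as [|[u v] C IH]; cbn [complL map].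
  - unfold hh; cbn [fst snd map]. rewrite h_top, h_bot. reflexivity.
  - rewrite map_prodl, IH. unfold hh at 1 2; cbn [map fst snd]. rewrite h_top, h_bot. reflexivity.
Qed.

Lemma cov_h s t C : Cov s t C -> Cov (h s) (h t) (map hh C).
Proof. revert s t; induction C as [|[u v] C IH]; intros s t hc; cbn [map].
  - apply cov_nil. apply cov_nil in hc. apply h_le, hc.
  - apply cov_cons in hc as [h1 h2]. unfold hh at 1; cbn [fst snd]. apply cov_cons. split.
    + rewrite <- h_join. apply IH, h1.
    + rewrite <- h_meet. apply IH, h2.
Qed.

Lemma LE_h X Y : LE X Y -> LE (map hh X) (map hh Y).
Proof. rewrite !LE_cov. intros H s t hin. apply in_map_iff in hin as ([a b]&e&hin).
  injection e as <- <-. apply cov_h, H, hin. Qed.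

Definition Fm' (f : BP L) : BP M := mk (map hh (rep f)).

Lemma LE_of_eq (K : Frame) (X Y : list (K*K)) : mk X = mk Y -> LE X Y.
Proof. intros e. change (ple (mk X) (mk Y)). rewrite e. apply ple_refl. Qed.

Lemma Fm_mk X : Fm' (mk X) = mk (map hh X).
Proof. unfold Fm'. pose proof (rep_spec (mk X)) as e.
  apply mk_eq; apply LE_h, LE_of_eq; auto. Qed.

Lemma Fm_mono f g : ple f g -> ple (Fm' f) (Fm' g).
Proof. intros hfg. apply mk_le, LE_h. change (ple (mk (rep f)) (mk (rep g))). rewrite <- !rep_spec. auto. Qed.

Lemma Bcompl_mk (K : Frame) (X : list (K*K)) : Bcompl (mk X) = mk (complL X).
Proof. destruct (complL_spec X) as [h1 h2].
  apply (@compl_unique (BD K) (mk X)); auto.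
  - change (ple (Bmeet (mk X) (Bcompl (mk X))) (Bbot K)). rewrite Bcompl_meet. apply ple_refl.
  - change (ple (Btop K) (Bjoin (mk X) (Bcompl (mk X)))). rewrite Bcompl_join. apply ple_refl.
Qed.

Lemma Fm_bool : bool_hom (A := BB L) (B := BB M) Fm'.
Proof. split; [|split; [|split; [|split]]].
  - intros a b. cbn [bmeet BB]. rewrite (rep_spec a), (rep_spec b). generalize (rep a) (rep b). intros X Y.
    rewrite Bmeet_mk, !Fm_mk, Bmeet_mk, map_prodl. reflexivity.
  - intros a b. cbn [bjoin BB]. rewrite (rep_spec a), (rep_spec b). generalize (rep a) (rep b). intros X Y.
    rewrite Bjoin_mk, !Fm_mk, Bjoin_mk, map_app. reflexivity.
  - intros a. cbn [bcompl BB]. rewrite (rep_spec a). generalize (rep a). intros X.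
    rewrite Bcompl_mk, !Fm_mk, Bcompl_mk, map_complL. reflexivity.
  - cbn [btop BB]. unfold Btop. rewrite Fm_mk. unfold hh; cbn [fst snd map]. rewrite h_top, h_bot. reflexivity.
  - cbn [bbot BB]. unfold Bbot. rewrite Fm_mk. reflexivity.
Qed.

Lemma Fm_io w : Fm' (io w) = io (h w).
Proof. unfold io. rewrite Fm_mk. unfold hh; cbn [fst snd map]. rewrite h_bot. reflexivity. Qed.

Lemma Fm_box (a : IB L) : ple (Fm' (box a)) (box (i := IB M) (Fm' a)).
Proof. cbn [box IB]. unfold Bbox at 1. rewrite Fm_io. apply io_mono, w0_ge.
  rewrite <- Fm_io. apply Fm_mono, w0_spec. Qed.

Lemma Fm_frame : frame_morphism (open_restr (A := IB L) (B := IB M) (f := Fm') Fm_box).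
Proof.
  apply fm_ext with (fun x => phi (L := M) (h (psi (L := L) x))).
  - intros x. apply sig_eq. cbn [open_restr proj1_sig phi].
    destruct (phi_psi_iso L) as (_&e&_). rewrite <- (e x) at 2. cbn [phi proj1_sig].
    rewrite Fm_io. reflexivity.
  - apply fm_comp. 2: apply (oiso_fm (phi_psi_iso M)).
    apply fm_comp. apply (oiso_fm (oiso_sym (phi_psi_iso L))). apply frmh_morph.
Qed.

Definition Fmap : ConsHom (FB L) (FB M) :=
  @Build_ConsHom (FB L) (FB M) Fm' Fm_bool Fm_box Fm_frame.

End Fmap.



Section BAT.
Variable A : BoolAlg.
Implicit Types x y z : A.

Lemma bc_meet x : ple (bmeet x (bcompl x)) (bbot A).
Proof. rewrite bcompl_meet. apply ple_refl. Qed.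
Lemma bc_join x : ple (btop A) (bjoin x (bcompl x)).
Proof. rewrite bcompl_join. apply ple_refl. Qed.

Lemma le_compl x y z : ple x (bjoin y z) <-> ple (bmeet x (bcompl y)) z.
Proof. split.
  - intros h. via (bmeet (bjoin y z) (bcompl y)). apply m_mono; lat.
    via (bjoin (bmeet y (bcompl y)) (bmeet z (bcompl y))). apply (@distr_r (BAD A)).
    apply j_lub. via (bbot A). apply bc_meet. lat. lat.
  - intros h. apply (@split_le (BAD A)) with (y := y) (z := bcompl y).
    via (btop A). lat. apply bc_join. lat. via z; lat.
Qed.

Lemma compl_bot : bcompl (bbot A) = btop A.
Proof. apply ple_antisym. lat. via (bjoin (bbot A) (bcompl (bbot A))). apply bc_join. lat. Qed.

Lemma demorgan y z : bcompl (bjoin y z) = bmeet (bcompl y) (bcompl z).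
Proof. destruct (@compl_step (BAD A) y (bcompl y) z (bcompl z) (bc_meet y) (bc_join y) (bc_meet z) (bc_join z)) as [h1 h2].
  apply (@compl_unique (BAD A) (bjoin y z)); auto. apply bc_meet. apply bc_join. Qed.
End BAT.

Section Eps.
Variable A : ConsAlg.
Definition GA : Frame := {| frm_poset := opens A; frm_is_frame := cons_frame A |}.
Notation L := GA.
Notation m := (@dmeet (FL L)). Notation j := (@djoin (FL L)).
Notation tp := (@dtop (FL L)). Notation bt := (@dbot (FL L)).
Definition vl (u : L) : A := proj1_sig u.

Lemma box_idem' (a : A) : box (box a) = box a.
Proof. apply ple_antisym. apply box_deflate. apply box_idem. Qed.

Lemma box_mono (a b : A) : ple a b -> ple (box a) (box b).
Proof. intros h. assert (e : bmeet a b = a) by (apply ple_antisym; lat).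
  rewrite <- e, box_meet. lat. Qed.

Lemma open_meet (u v : L) : box (bmeet (vl u) (vl v)) = bmeet (vl u) (vl v).
Proof. rewrite box_meet. unfold vl. rewrite (proj2_sig u), (proj2_sig v). reflexivity. Qed.
Lemma open_join (u v : L) : box (bjoin (vl u) (vl v)) = bjoin (vl u) (vl v).
Proof. apply ple_antisym. apply box_deflate. apply j_lub.
  - unfold vl at 1. rewrite <- (proj2_sig u). apply box_mono. lat.
  - unfold vl at 1. rewrite <- (proj2_sig v). apply box_mono. lat.
Qed.

Lemma vl_le (u v : L) : ple u v <-> ple (vl u) (vl v).
Proof. reflexivity. Qed.

Lemma vl_meet (u v : L) : vl (m u v) = bmeet (vl u) (vl v).
Proof.
  set (o := exist (fun a : A => box a = a) _ (open_meet u v) : L).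
  assert (g : is_glb2 u v o).
  { split; [|split]. apply (vl_le o u). apply mle_l. apply (vl_le o v). apply mle_r.
    intros y h1 h2. apply (vl_le y o). apply m_glb; auto. }
  change (vl (fmeet u v) = bmeet (vl u) (vl v)).
  rewrite (glb_unique (fmeet_spec u v) g). reflexivity. Qed.

Lemma vl_join (u v : L) : vl (j u v) = bjoin (vl u) (vl v).
Proof.
  set (o := exist (fun a : A => box a = a) _ (open_join u v) : L).
  assert (g : is_lub (fun x => x = u \/ x = v) o).
  { split. intros s [-> | ->]. apply (vl_le _ o). apply jle_l. apply (vl_le _ o). apply jle_r.
    intros y h. apply (vl_le o y). apply j_lub. apply (h u); auto. apply (h v); auto. }
  change (vl (fsup (fun x => x = u \/ x = v)) = bjoin (vl u) (vl v)).
  rewrite (lub_unique (fsup_spec _) g). reflexivity. Qed.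

Lemma vl_top : vl tp = btop A.
Proof. apply ple_antisym. lat.
  set (o := exist (fun a : A => box a = a) _ (box_top A) : L).
  exact (proj1 (vl_le o tp) (@le_t (FL L) o)). Qed.
Lemma vl_bot : vl bt = bbot A.
Proof. apply ple_antisym. 2: lat.
  assert (e : box (bbot A) = bbot A) by (apply ple_antisym; [apply box_deflate| lat]).
  set (o := exist (fun a : A => box a = a) _ e : L).
  exact (proj1 (vl_le bt o) (@b_le (FL L) o)). Qed.

Fixpoint interp (C : list (L*L)) : A :=
  match C with
  | [] => bbot A
  | (u,v) :: C' => bjoin (bmeet (vl u) (bcompl (vl v))) (interp C')
  end.

Lemma Gd_sem C w z : Gd C w z <-> ple (bmeet (vl w) (interp C)) (vl z).
Proof.
  unfold Gd. induction C as [|[u v] C IH]; cbn [interp].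
  - split. intros _. lat. intros _ s t [].
  - split.
    + intros h. via (bjoin (bmeet (vl w) (bmeet (vl u) (bcompl (vl v)))) (bmeet (vl w) (interp C))).
      apply (@distr_l (BAD A)). apply j_lub.
      * assert (h1 := h u v (or_introl eq_refl)). change (ple (vl (m w u)) (vl (j v z))) in h1.
        rewrite vl_meet, vl_join in h1. apply le_compl in h1. via (bmeet (bmeet (vl w) (vl u)) (bcompl (vl v))); lat.
      * apply IH. intros s t hin; apply h; right; auto.
    + intros h s t [e|hin].
      * injection e as <- <-. change (ple (vl (m w u)) (vl (j v z))). rewrite vl_meet, vl_join. apply le_compl.
        via (bmeet (vl w) (bjoin (bmeet (vl u) (bcompl (vl v))) (interp C))); auto. lat.
      * apply IH; auto. via (bmeet (vl w) (bjoin (bmeet (vl u) (bcompl (vl v))) (interp C))); auto. lat.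
Qed.

Lemma cov_sem s t C : Cov s t C -> ple (bmeet (vl s) (bcompl (vl t))) (interp C).
Proof.
  revert s t; induction C as [|[u v] C IH]; intros s t hc; cbn [interp].
  - apply cov_nil in hc. change (ple (vl s) (vl t)) in hc. via (bmeet (vl t) (bcompl (vl t))). lat. apply bc_meet.
  - apply cov_cons in hc as [h1 h2]. apply IH in h1. apply IH in h2.
    rewrite vl_join, demorgan in h1. rewrite vl_meet in h2.
    set (x := bmeet (vl s) (bcompl (vl t))).
    apply (@split_le (BAD A)) with (y := vl u) (z := bcompl (vl u)).
    + via (btop A). lat. apply bc_join.
    + apply (@split_le (BAD A)) with (y := vl v) (z := bcompl (vl v)).
      * via (btop A). lat. apply bc_join.
      * apply jle_rt. via (bmeet (bmeet (vl s) (vl v)) (bcompl (vl t))); auto. unfold x; lat.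
      * apply jle_lt. unfold x; lat.
    + apply jle_rt. via (bmeet (vl s) (bmeet (bcompl (vl t)) (bcompl (vl u)))); auto. unfold x; lat.
Qed.

Lemma LE_sem X Y : LE X Y <-> ple (interp X) (interp Y).
Proof. split.
  - rewrite LE_cov. intros h. induction X as [|[s t] X IH]; cbn [interp]. lat.
    apply j_lub. apply cov_sem, h; left; auto. apply IH. intros; apply h; right; auto.
  - intros h. apply LE_iff. intros w z g. apply Gd_sem. apply Gd_sem in g.
    via (bmeet (vl w) (interp Y)); auto. apply m_mono; lat.
Qed.

Definition eps0 (f : BP L) : A := interp (rep f).
Lemma eps0_mk X : eps0 (mk X) = interp X.
Proof. pose proof (rep_spec (mk X)) as e. apply ple_antisym; apply LE_sem; apply LE_of_eq; auto. Qed.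
Lemma eps0_le f g : ple f g <-> ple (eps0 f) (eps0 g).
Proof. rewrite (rep_spec f), (rep_spec g), !eps0_mk. apply LE_sem. Qed.
Lemma eps0_inj f g : eps0 f = eps0 g -> f = g.
Proof. intros e; apply ple_antisym; apply eps0_le; rewrite e; apply ple_refl. Qed.

Lemma interp_app X Y : interp (X ++ Y) = bjoin (interp X) (interp Y).
Proof. induction X as [|[u v] X IH]; cbn [interp app].
  - apply ple_antisym; lat.
  - rewrite IH. apply ple_antisym; lat. Qed.

Lemma interp_prod_ge X Y : ple (bmeet (interp X) (interp Y)) (interp (prodl X Y)).
Proof. induction X as [|[u v] X IH]; cbn [interp prodl].
  - lat.
  - rewrite interp_app. via (bjoin (bmeet (bmeet (vl u) (bcompl (vl v))) (interp Y)) (bmeet (interp X) (interp Y))).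
    apply (@distr_r (BAD A)). apply j_mono; auto.
    clear IH. induction Y as [|[a b] Y IHY]; cbn [interp mapuv map fst snd].
    + lat.
    + change (ple (bmeet (bmeet (vl u) (bcompl (vl v))) (bjoin (bmeet (vl a) (bcompl (vl b))) (interp Y)))
        (bjoin (bmeet (vl (m u a)) (bcompl (vl (j v b)))) (interp (mapuv u v Y)))).
      via (bjoin (bmeet (bmeet (vl u) (bcompl (vl v))) (bmeet (vl a) (bcompl (vl b))))
              (bmeet (bmeet (vl u) (bcompl (vl v))) (interp Y))).
      apply (@distr_l (BAD A)). apply j_mono; auto.
      rewrite vl_meet, vl_join, demorgan. lat.
Qed.

Lemma interp_meet X Y : interp (prodl X Y) = bmeet (interp X) (interp Y).
Proof. apply ple_antisym. 2: apply interp_prod_ge.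
  destruct (mk_glb X Y) as (h1&h2&_). apply LE_sem in h1. apply LE_sem in h2. lat. Qed.

Lemma interp_top : interp [(tp, bt)] = btop A.
Proof. cbn [interp]. rewrite vl_top, vl_bot, compl_bot. apply ple_antisym; lat. Qed.

Lemma interp_compl X : interp (complL X) = bcompl (interp X).
Proof. destruct (complL_spec X) as [h1 h2].
  apply (@compl_unique (BAD A) (interp X)).
  - change (ple (bmeet (interp X) (interp (complL X))) (bbot A)).
    rewrite <- interp_meet. apply (proj1 (LE_sem _ [])). rewrite Bmeet_mk in h1. exact h1.
  - change (ple (btop A) (bjoin (interp X) (interp (complL X)))).
    rewrite <- interp_app, <- interp_top. apply (proj1 (LE_sem _ _)). rewrite Bjoin_mk in h2. exact h2.
  - apply bc_meet. - apply bc_join.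
Qed.

Lemma interp_io (w : L) : interp [(w, bt)] = vl w.
Proof. cbn [interp]. rewrite vl_bot, compl_bot. apply ple_antisym; lat. Qed.

Lemma interp_surj (a : A) : exists X, interp X = a.
Proof.
  apply (@cons_essential A a (fun a => exists X, interp X = a)).
  - intros x hx. exists [(exist (fun a : A => box a = a) x hx : L, bt)]. apply interp_io.
  - intros x y [X <-] [Y <-]. exists (prodl X Y). apply interp_meet.
  - intros x y [X <-] [Y <-]. exists (X ++ Y). apply interp_app.
  - intros x [X <-]. exists (complL X). apply interp_compl.
  - exists [(tp, bt)]. apply interp_top.
  - exists []. reflexivity.
Qed.

Definition eps1 (a : A) : BP L := mk (proj1_sig (constructive_indefinite_description _ (interp_surj a))).
Lemma eps0_eps1 a : eps0 (eps1 a) = a.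
Proof. unfold eps1. destruct constructive_indefinite_description as [X e]. simpl.
  rewrite eps0_mk. exact e. Qed.
Lemma eps1_eps0 f : eps1 (eps0 f) = f.
Proof. apply eps0_inj. apply eps0_eps1. Qed.

Lemma eps_iso : oiso (P := BP L) (Q := A) eps0 eps1.
Proof. split; [|split; [|split]].
  - apply eps1_eps0. - apply eps0_eps1.
  - intros; apply eps0_le; auto.
  - intros y y' h. apply eps0_le. rewrite !eps0_eps1. auto.
Qed.

Lemma eps0_io (w : L) : eps0 (io w) = vl w.
Proof. unfold io. rewrite eps0_mk. apply interp_io. Qed.

Lemma eps0_box (f : BP L) : eps0 (Bbox f) = box (eps0 f).
Proof. apply ple_antisym.
  - unfold Bbox. rewrite eps0_io. unfold vl at 1. rewrite <- (proj2_sig (w0 f)).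
    apply box_mono. rewrite <- eps0_io. apply eps0_le, w0_spec.
  - set (w := exist (fun a : A => box a = a) (box (eps0 f)) (box_idem' (eps0 f)) : L).
    unfold Bbox. rewrite eps0_io. change (ple w (w0 f)). apply w0_ge. apply eps0_le.
    rewrite eps0_io. apply box_deflate.
Qed.

Lemma eps0_bool : bool_hom (A := BB L) (B := A) eps0.
Proof. exact (@oiso_bool (BB L) A eps0 eps1 eps_iso). Qed.
Lemma eps0_boxle (a : IB L) : ple (eps0 (box a)) (box (eps0 a)).
Proof. change (ple (eps0 (Bbox a)) (box (eps0 a))). rewrite eps0_box. apply ple_refl. Qed.
Lemma eps0_frame : frame_morphism (open_restr (A := IB L) (B := A) (f := eps0) eps0_boxle).
Proof. apply fm_ext with (psi (L := L)).
  - intros x. apply sig_eq. cbn [open_restr proj1_sig psi].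
    destruct (phi_psi_iso L) as (_&e&_). rewrite <- (e x) at 2. cbn [phi proj1_sig].
    rewrite eps0_io. reflexivity.
  - apply (oiso_fm (oiso_sym (phi_psi_iso L))).
Qed.
Definition eps : ConsHom (FB L) A := @Build_ConsHom (FB L) A eps0 eps0_bool eps0_boxle eps0_frame.

Lemma eps1_bool : bool_hom (A := A) (B := BB L) eps1.
Proof. exact (@oiso_bool A (BB L) eps1 eps0 (oiso_sym eps_iso)). Qed.
Lemma eps1_boxle (a : A) : ple (eps1 (box a)) (box (i := IB L) (eps1 a)).
Proof. apply eps0_le. change (ple (eps0 (eps1 (box a))) (eps0 (Bbox (eps1 a)))).
  rewrite eps0_box, !eps0_eps1. apply ple_refl. Qed.
Lemma eps1_frame : frame_morphism (open_restr (A := A) (B := IB L) (f := eps1) eps1_boxle).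
Proof. apply fm_ext with (phi (L := L)).
  - intros x. apply sig_eq. cbn [open_restr proj1_sig phi].
    apply eps0_inj. rewrite eps0_io, eps0_eps1. reflexivity.
  - apply (oiso_fm (phi_psi_iso L)).
Qed.
Definition eps' : ConsHom A (FB L) := @Build_ConsHom A (FB L) eps1 eps1_bool eps1_boxle eps1_frame.

End Eps.


Definition Gm (A B : ConsAlg) (h : ConsHom A B) : FrmHom (GA A) (GA B) :=
  @Build_FrmHom (GA A) (GA B) (open_restr (consh_box h)) (consh_frame h).

Lemma interp_h (A B : ConsAlg) (h : ConsHom A B) (X : list (GA A * GA A)) :
  h (interp X) = interp (map (hh (Gm h)) X).
Proof.
  destruct (consh_bool h) as (hm&hj&hc&ht&hb).
  induction X as [|[u v] X IH]; cbn [interp map].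
  - apply hb.
  - rewrite hj, hm, hc, IH. reflexivity.
Qed.

Definition etaH (L : Frame) : FrmHom L (GA (FB L)) :=
  @Build_FrmHom L (GA (FB L)) (@phi L) (oiso_fm (phi_psi_iso L)).
Definition etaH' (L : Frame) : FrmHom (GA (FB L)) L :=
  @Build_FrmHom (GA (FB L)) L (@psi L) (oiso_fm (oiso_sym (phi_psi_iso L))).

Theorem theorem4p6 : equivalence_Frm_Cons.
Proof.
  exists FB, (fun L M h => Fmap h), GA, Gm, etaH, etaH', eps, eps'.
  split; [|split; [|split; [|split; [|split; [|split; [|split; [|split; [|split]]]]]]]].
  - intros L h hid y. cbn [consh Fmap]. unfold Fm'.
    replace (map (hh h) (rep y)) with (rep y). symmetry; apply rep_spec.
    rewrite <- (map_id (rep y)) at 1. apply map_ext. intros [a b]. unfold hh; cbn [fst snd].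
    rewrite !hid. reflexivity.
  - intros L M N h k hk e y. cbn [consh Fmap].
    rewrite (rep_spec y). rewrite !Fm_mk. rewrite map_map. f_equal. apply map_ext.
    intros [a b]. unfold hh; cbn [fst snd]. rewrite !e. reflexivity.
  - intros A h hid y. apply sig_eq. cbn [Gm frmh open_restr proj1_sig]. apply hid.
  - intros A B C h k hk e y. apply sig_eq. cbn [Gm frmh open_restr proj1_sig]. apply e.
  - intros L x. cbn [etaH etaH' frmh psi phi proj1_sig]. apply w0_io.
  - intros L y. cbn [etaH etaH' frmh]. destruct (phi_psi_iso L) as (_&e&_). apply e.
  - intros L M h x. apply sig_eq. cbn [Gm etaH frmh open_restr proj1_sig phi consh Fmap].
    apply Fm_io.
  - intros A x. cbn [eps eps' consh]. apply eps1_eps0.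
  - intros A y. cbn [eps eps' consh]. apply eps0_eps1.
  - intros A B h x. cbn [eps consh Fmap]. rewrite (rep_spec x). rewrite Fm_mk, !eps0_mk.
    apply interp_h.
Qed.
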